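(* The horizontal curve $\gamma_0$ is not a singular (abnormal) curve of the distribution $\mathcal D_n$ on $\mathbb C_n$. That is, the endpoint map $E:H^2_{\mathcal D_n}(\gamma_0(0))\to\mathbb C_n$, $E(c)=c(1)$, has surjective differential at $\gamma_0$. Consequently, near $\gamma_0$, the set of horizontal curves in $H^2_{\mathcal D_n}(\gamma_0(0))$ ending at $\gamma_0(1)=\sigma(\gamma_0(0))$ is a Hilbert submanifold of codimension $2n-1$.
   Context: Let $n\ge 3$. $\mathcal P_n$ is the manifold of convex $n$-gons in $\mathbb R^2$, encoded by counterclockwise-ordered side lines $L_i=\{x\cos\alpha_i+y\sin\alpha_i=p_i\}$ (indices mod $n$, $(\cos\alpha_i,\sin\alpha_i)$ the outer unit normal). $\mathcal D_n$ is the distribution spanned by $\xi_i=\partial_{\alpha_i}+\Phi_i\partial_{p_i}$, $i=1,\dots,n$, with $$\Phi_i=\frac{\cos^2\!\big(\frac{\alpha_i-\alpha_{i-1}}2\big)(p_{i+1}+p_i)-\cos^2\!\big(\frac{\alpha_{i+1}-\alpha_i}2\big)(p_{i-1}+p_i)}{2\sin\!\big(\frac{\alpha_{i+1}-\alpha_{i-1}}2\big)\cos\!\big(\frac{\alpha_i-\alpha_{i-1}}2\big)\cos\!\big(\frac{\alpha_{i+1}-\alpha_i}2\big)}.$$ Geometrically, $\xi_i$ is the infinitesimal counterclockwise rotation of $L_i$ about its tangency point with the circle tangent to $L_{i-1},L_i,L_{i+1}$. That circle lies on the polygon's side of $L_{i\pm1}$ and on the opposite side of $L_i$. $\mathcal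 D_n$ is tangent to the level sets of the perimeter $F$, and $\mathbb C_n=\{F=2n\tan(\pi/n)\}$. A horizontal curve is a curve tangent to $\mathcal D_n$. $H^2_{\mathcal D_n}(c_0)$ denotes the Hilbert manifold of horizontal curves $c:[0,1]\to\mathbb C_n$ with $c(0)=c_0$ and with first two derivatives square integrable. $\gamma_0(t)$ is given by $\alpha_i(t)=\frac{2\pi}{n}(t+i-1)$, $p_i(t)=1$: the regular $n$-gons circumscribed about the unit circle. $\sigma$ is the cyclic relabeling of sides $L_i\mapsto L_{i+1}$. *)

(* Defs.v *)
From Stdlib Require Import Reals Lra Lia.
From Coquelicot Require Import Coquelicot.
Open Scope R_scope.

(* A point of P_n is encoded (locally, on a lift of the angles) by
   a : nat -> R (angles alpha) and p : nat -> R (support numbers), with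
   0-based indices 0..n-1 (paper index i corresponds to i-1 here).
   Indices are cyclic, with the angle convention alpha_{i+n} = alpha_i + 2 pi
   (counterclockwise order of the sides). *)

Definition aprev (n : nat) (a : nat -> R) (i : nat) : R :=
  match i with O => a (n - 1)%nat - 2 * PI | S k => a k end.
Definition anext (n : nat) (a : nat -> R) (i : nat) : R :=
  if Nat.eqb i (n - 1) then a O + 2 * PI else a (S i).
Definition pprev (n : nat) (p : nat -> R) (i : nat) : R :=
  match i with O => p (n - 1)%nat | S k => p k end.
Definition pnext (n : nat) (p : nat -> R) (i : nat) : R :=
  if Nat.eqb i (n - 1) then p O else p (S i).

(* The coefficient Phi_i of the vector field xi_i = d/dalpha_i + Phi_i d/dp_i *)
Definition Phi (n : nat) (a p : nat -> R) (i : nat) : R :=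
  (cos ((a i - aprev n a i) / 2) ^ 2 * (pnext n p i + p i)
   - cos ((anext n a i - a i) / 2) ^ 2 * (pprev n p i + p i))
  / (2 * sin ((anext n a i - aprev n a i) / 2)
       * cos ((a i - aprev n a i) / 2) * cos ((anext n a i - a i) / 2)).

(* Length of side i of the polygon (segment of L_i between L_{i-1} and L_{i+1}) *)
Definition side_length (n : nat) (a p : nat -> R) (i : nat) : R :=
  (pnext n p i - p i * cos (anext n a i - a i)) / sin (anext n a i - a i)
  + (pprev n p i - p i * cos (a i - aprev n a i)) / sin (a i - aprev n a i).

Definition perimeter (n : nat) (a p : nat -> R) : R :=
  sum_f_R0 (fun i => side_length n a p i) (n - 1).

Definition gamma0_a (n : nat) (t : R) (i : nat) : R := 2 * PI / INR n * (t + INR i).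
Definition gamma0_p (n : nat) (t : R) (i : nat) : R := 1.

(* c = (ca, cp) is horizontal at time t, with controls u:
   c'(t) = sum_j u_j(t) xi_j(c(t)). *)
Definition horizontal_with (n : nat) (ca cp : R -> nat -> R) (u : nat -> R -> R)
  (t : R) : Prop :=
  forall j, (j < n)%nat ->
    is_derive (fun s => ca s j) t (u j t) /\
    is_derive (fun s => cp s j) t (u j t * Phi n (ca t) (cp t) j).

Definition dirPhi (n : nat) (a p va vp : nat -> R) (j : nat) : R :=
  Derive (fun s => Phi n (fun k => a k + s * va k) (fun k => p k + s * vp k) j) 0.

(* (da, dp) solves at time t the linearization, along the horizontal curve
   (ca, cp) with controls u, of the control system c' = sum_j u_j xi_j(c),
   for the control variation du:
   dc' = sum_j du_j xi_j(c) + sum_j u_j (D xi_j)(c)[dc]. *)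
Definition linearized_at (n : nat) (ca cp : R -> nat -> R) (u du : nat -> R -> R)
  (da dp : R -> nat -> R) (t : R) : Prop :=
  forall j, (j < n)%nat ->
    is_derive (fun s => da s j) t (du j t) /\
    is_derive (fun s => dp s j) t
      (du j t * Phi n (ca t) (cp t) j
       + u j t * dirPhi n (ca t) (cp t) (da t) (dp t) j).

(* (va, vp) is tangent to the level set C_n of F at (a, p): dF(a,p)[v] = 0 *)
Definition tangent_to_level (n : nat) (a p va vp : nat -> R) : Prop :=
  Derive (fun s => perimeter n (fun k => a k + s * va k) (fun k => p k + s * vp k)) 0 = 0.

(* Main.v *)
Require Import Defs.
From Stdlib Require Import Reals Lra Lia.
From Coquelicot Require Import Coquelicot.
Open Scope R_scope.

Definition nx (n j : nat) : nat := if Nat.eqb j (n-1) then 0%nat else S j.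
Definition pr (n j : nat) : nat := match j with O => (n-1)%nat | S k => k end.

Lemma pnext_nx n (v : nat -> R) j : pnext n v j = v (nx n j).
Proof. unfold pnext, nx. destruct (Nat.eqb j (n-1)); reflexivity. Qed.
Lemma pprev_pr n (v : nat -> R) j : pprev n v j = v (pr n j).
Proof. destruct j; reflexivity. Qed.
Lemma anext_lin n a X s j : anext n (fun k => a k + s * X k) j = anext n a j + s * pnext n X j.
Proof. unfold anext, pnext. destruct (Nat.eqb j (n-1)); ring. Qed.
Lemma aprev_lin n a X s j : aprev n (fun k => a k + s * X k) j = aprev n a j + s * pprev n X j.
Proof. unfold aprev, pprev. destruct j; ring. Qed.
Lemma pnext_lin n c Y s j : pnext n (fun k => c + s * Y k) j = c + s * pnext n Y j.
Proof. unfold pnext. destruct (Nat.eqb j (n-1)); ring. Qed.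
Lemma pprev_lin n c Y s j : pprev n (fun k => c + s * Y k) j = c + s * pprev n Y j.
Proof. unfold pprev. destruct j; ring. Qed.
Lemma pnext_c n (c : R) j : pnext n (fun _ => c) j = c.
Proof. unfold pnext. destruct (Nat.eqb j (n-1)); ring. Qed.
Lemma pprev_c n (c : R) j : pprev n (fun _ => c) j = c.
Proof. unfold pprev. destruct j; ring. Qed.

Lemma nx_lt n i : (i < n)%nat -> (nx n i < n)%nat.
Proof. intros H. unfold nx. destruct (Nat.eqb_spec i (n-1)); lia. Qed.
Lemma pr_lt n i : (i < n)%nat -> (pr n i < n)%nat.
Proof. intros H. unfold pr. destruct i; lia. Qed.
Lemma pr_nx n i : (i < n)%nat -> pr n (nx n i) = i.
Proof. intros H. unfold nx. destruct (Nat.eqb_spec i (n-1)); simpl; lia. Qed.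
Lemma nx_pr n i : (i < n)%nat -> nx n (pr n i) = i.
Proof. intros H. unfold nx, pr. destruct i.
  - rewrite Nat.eqb_refl. reflexivity.
  - destruct (Nat.eqb_spec i (n-1)); lia. Qed.

Lemma gamma0_m n t j : (1 <= n)%nat -> (j < n)%nat ->
  gamma0_a n t j - aprev n (gamma0_a n t) j = 2 * (PI / INR n).
Proof.
  intros H1 Hj. assert (HI: INR n <> 0) by (apply not_0_INR; lia).
  unfold aprev, gamma0_a. destruct j.
  - rewrite minus_INR by lia. simpl INR. field. auto.
  - rewrite S_INR. field. auto.
Qed.
Lemma gamma0_p' n t j : (1 <= n)%nat -> (j < n)%nat ->
  anext n (gamma0_a n t) j - gamma0_a n t j = 2 * (PI / INR n).
Proof.
  intros H1 Hj. assert (HI: INR n <> 0) by (apply not_0_INR; lia).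
  unfold anext, gamma0_a. destruct (Nat.eqb_spec j (n-1)).
  - subst. rewrite minus_INR by lia. simpl INR. field. auto.
  - rewrite S_INR. field. auto.
Qed.

Fixpoint psum (f : nat -> R) (m : nat) : R :=
  match m with O => 0 | S k => psum f k + f k end.

Lemma psum_ext f g m : (forall i, (i < m)%nat -> f i = g i) -> psum f m = psum g m.
Proof. induction m; intros H; simpl. reflexivity. rewrite IHm by (intros; apply H; lia). rewrite H by lia. reflexivity. Qed.
Lemma psum_add f g m : psum (fun i => f i + g i) m = psum f m + psum g m.
Proof. induction m; simpl. ring. rewrite IHm. ring. Qed.
Lemma psum_scal c f m : psum (fun i => c * f i) m = c * psum f m.
Proof. induction m; simpl. ring. rewrite IHm. ring. Qed.
Lemma psum_subc f c m : psum (fun i => f i - c) m = psum f m - INR m * c.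
Proof. induction m; simpl psum. simpl. ring. rewrite IHm, S_INR. ring. Qed.
Lemma psum_const c m : psum (fun _ => c) m = INR m * c.
Proof. induction m; simpl psum. simpl. ring. rewrite IHm, S_INR. ring. Qed.
Lemma psum_shift f m : psum (fun i => f (S i)) m + f 0%nat = psum f (S m).
Proof. induction m; simpl psum. ring. simpl psum in IHm. rewrite <- IHm. ring. Qed.
Lemma sum_psum f m : sum_f_R0 f m = psum f (S m).
Proof. induction m; simpl. ring. simpl in IHm. rewrite IHm. ring. Qed.

Lemma psum_pnext n Y : (1 <= n)%nat -> psum (pnext n Y) n = psum Y n.
Proof.
  intros H. destruct n as [|m]. lia.
  change (psum (pnext (S m) Y) m + pnext (S m) Y m = psum Y (S m)).
  rewrite <- psum_shift.
  rewrite (psum_ext _ (fun i => Y (S i)) m).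
  - unfold pnext. replace (S m - 1)%nat with m by lia. rewrite Nat.eqb_refl. ring.
  - intros i Hi. unfold pnext. replace (S m - 1)%nat with m by lia.
    destruct (Nat.eqb_spec i m). lia. reflexivity.
Qed.
Lemma psum_pprev n Y : (1 <= n)%nat -> psum (pprev n Y) n = psum Y n.
Proof.
  intros H. destruct n as [|m]. lia.
  rewrite <- psum_shift. simpl. replace (m - 0)%nat with m by lia.
  rewrite (psum_ext _ Y). reflexivity.
  intros i Hi. reflexivity.
Qed.
Definition Kc (th : R) := / (2 * cos th ^ 2).
Definition Lc (th : R) := / (4 * sin th * cos th).

Lemma PhiL_deriv th dm dp yn y0 yp : 0 < th < PI/2 ->
  is_derive (fun s => (cos((2*th + s*dm)/2)^2*((1+s*yn)+(1+s*y0)) - cos((2*th+s*dp)/2)^2*((1+s*yp)+(1+s*y0)))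
     /(2*sin((2*th+s*dp + (2*th+s*dm))/2)*cos((2*th+s*dm)/2)*cos((2*th+s*dp)/2))) 0
   (Kc th*(dp-dm) + Lc th*(yn-yp)).
Proof.
  intros H.
  assert (Hs: 0 < sin th) by (apply sin_gt_0; lra).
  assert (Hc: 0 < cos th) by (apply cos_gt_0; lra).
  auto_derive; repeat rewrite Rmult_0_l; repeat rewrite Rplus_0_r;
    replace ((2*th + 2*th)*/2) with (2*th) by field;
    replace (2*th*/2) with th by field; rewrite sin_2a.
  - apply Rgt_not_eq. repeat apply Rmult_lt_0_compat; lra.
  - unfold Kc, Lc. field. lra.
Qed.

Lemma SL_deriv th dm dp yn y0 yp : 0 < th < PI/2 ->
  is_derive (fun s => (1 + s*yn - (1+s*y0)*cos(2*th+s*dp))/sin(2*th+s*dp)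
     + (1 + s*yp - (1+s*y0)*cos(2*th+s*dm))/sin(2*th+s*dm)) 0
   ((yn + yp - 2*y0*cos(2*th))/sin(2*th)
     + (sin (2*th)^2 + cos (2*th)^2 - cos (2*th))/sin(2*th)^2 * (dp+dm)).
Proof.
  intros H.
  assert (Hs: 0 < sin th) by (apply sin_gt_0; lra).
  assert (Hc: 0 < cos th) by (apply cos_gt_0; lra).
  assert (H2: 0 < sin (2*th)) by (rewrite sin_2a; repeat apply Rmult_lt_0_compat; lra).
  auto_derive; repeat rewrite Rmult_0_l; repeat rewrite Rplus_0_r.
  - repeat split; lra.
  - field. lra.
Qed.

Section Line.
Variables (n : nat) (a X Y : nat -> R) (th : R) (j : nat).
Hypothesis Hm : a j - aprev n a j = 2 * th.
Hypothesis Hp : anext n a j - a j = 2 * th.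

Lemma Phi_line s : Phi n (fun k => a k + s * X k) (fun k => 1 + s * Y k) j =
  (cos((2*th + s*(X j - pprev n X j))/2)^2*((1+s*pnext n Y j)+(1+s*Y j))
   - cos((2*th+s*(pnext n X j - X j))/2)^2*((1+s*pprev n Y j)+(1+s*Y j)))
     /(2*sin((2*th+s*(pnext n X j - X j) + (2*th+s*(X j - pprev n X j)))/2)
       *cos((2*th+s*(X j - pprev n X j))/2)*cos((2*th+s*(pnext n X j - X j))/2)).
Proof.
  unfold Phi. rewrite anext_lin, aprev_lin, pnext_lin, pprev_lin. cbv beta.
  replace (a j + s * X j - (aprev n a j + s * pprev n X j)) with (2*th + s*(X j - pprev n X j)) by lra.
  replace (anext n a j + s * pnext n X j - (a j + s * X j)) with (2*th+s*(pnext n X j - X j)) by lra.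
  replace (anext n a j + s * pnext n X j - (aprev n a j + s * pprev n X j))
    with (2*th+s*(pnext n X j - X j) + (2*th+s*(X j - pprev n X j))) by lra.
  reflexivity.
Qed.

Lemma SL_line s : side_length n (fun k => a k + s * X k) (fun k => 1 + s * Y k) j =
  (1 + s*pnext n Y j - (1+s*Y j)*cos(2*th+s*(pnext n X j - X j)))/sin(2*th+s*(pnext n X j - X j))
     + (1 + s*pprev n Y j - (1+s*Y j)*cos(2*th+s*(X j - pprev n X j)))/sin(2*th+s*(X j - pprev n X j)).
Proof.
  unfold side_length. rewrite anext_lin, aprev_lin, pnext_lin, pprev_lin. cbv beta.
  replace (a j + s * X j - (aprev n a j + s * pprev n X j)) with (2*th + s*(X j - pprev n X j)) by lra.
  replace (anext n a j + s * pnext n X j - (a j + s * X j)) with (2*th+s*(pnext n X j - X j)) by lra.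
  reflexivity.
Qed.

Lemma Phi0 : Phi n a (fun _ => 1) j = 0.
Proof.
  unfold Phi. rewrite pnext_c, pprev_c.
  replace (anext n a j - aprev n a j) with (2*th + 2*th) by lra.
  rewrite Hm, Hp. unfold Rdiv. ring.
Qed.

Lemma SL0 : 0 < th < PI/2 -> side_length n a (fun _ => 1) j = 2 * tan th.
Proof.
  intros H.
  assert (Hs: 0 < sin th) by (apply sin_gt_0; lra).
  assert (Hc: 0 < cos th) by (apply cos_gt_0; lra).
  unfold side_length. rewrite pnext_c, pprev_c, Hm, Hp.
  rewrite cos_2a_sin, sin_2a. unfold tan. field. lra.
Qed.

Lemma dirPhi_val : 0 < th < PI/2 ->
  dirPhi n a (fun _ => 1) X Y j =
  Kc th * ((pnext n X j - X j) - (X j - pprev n X j)) + Lc th * (pnext n Y j - pprev n Y j).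
Proof.
  intros H. unfold dirPhi.
  erewrite Derive_ext.
  2:{ intros s. apply Phi_line. }
  apply is_derive_unique. apply PhiL_deriv. exact H.
Qed.

Lemma SL_dline : 0 < th < PI/2 ->
  is_derive (fun s => side_length n (fun k => a k + s * X k) (fun k => 1 + s * Y k) j) 0
   ((pnext n Y j + pprev n Y j - 2*Y j*cos(2*th))/sin(2*th)
     + (sin (2*th)^2 + cos (2*th)^2 - cos (2*th))/sin(2*th)^2 * ((pnext n X j - X j)+(X j - pprev n X j))).
Proof.
  intros H. eapply is_derive_ext.
  { intros s. symmetry. apply SL_line. }
  apply SL_deriv. exact H.
Qed.
End Line.

Lemma sum_deriv (F : R -> nat -> R) (dF : nat -> R) N :
  (forall i, (i <= N)%nat -> is_derive (fun s => F s i) 0 (dF i)) ->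
  is_derive (fun s => sum_f_R0 (F s) N) 0 (sum_f_R0 dF N).
Proof.
  induction N; intros H; simpl.
  - apply H. lia.
  - apply (is_derive_plus (fun s => sum_f_R0 (F s) N) (fun s => F s (S N))). apply IHN. intros; apply H; lia. apply H; lia.
Qed.

Lemma perim_deriv n a X Y th : (1 <= n)%nat -> 0 < th < PI/2 ->
  (forall j, (j < n)%nat -> a j - aprev n a j = 2 * th /\ anext n a j - a j = 2 * th) ->
  is_derive (fun s => perimeter n (fun k => a k + s * X k) (fun k => 1 + s * Y k)) 0
    ((2 - 2 * cos (2*th)) / sin (2*th) * psum Y n).
Proof.
  intros H1 H Ha.
  assert (Hs: 0 < sin th) by (apply sin_gt_0; lra).
  assert (Hc: 0 < cos th) by (apply cos_gt_0; lra).
  assert (H2: 0 < sin (2*th)) by (rewrite sin_2a; repeat apply Rmult_lt_0_compat; lra).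
  set (E := (sin (2*th)^2 + cos (2*th)^2 - cos (2*th))/sin(2*th)^2).
  set (dF := fun j => (pnext n Y j + pprev n Y j - 2*Y j*cos(2*th))/sin(2*th)
     + E * ((pnext n X j - X j)+(X j - pprev n X j))).
  replace ((2 - 2 * cos (2*th)) / sin (2*th) * psum Y n) with (sum_f_R0 dF (n-1)).
  - unfold perimeter. apply sum_deriv. intros i Hi.
    destruct (Ha i) as [A B]. lia. apply SL_dline; assumption.
  - rewrite sum_psum. replace (S (n-1)) with n by lia.
    rewrite (psum_ext dF (fun i => /sin (2*th) * pnext n Y i + (/sin (2*th) * pprev n Y i
      + ((-2*cos (2*th)/sin (2*th)) * Y i + (E * pnext n X i + (-E) * pprev n X i))))).
    + repeat rewrite psum_add. repeat rewrite psum_scal.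
      rewrite !psum_pnext, !psum_pprev by exact H1. field. lra.
    + intros i Hi. unfold dF. field. lra.
Qed.

Definition Gv (vp : nat -> R) i := psum vp (S i).
Definition wv n vp i := Gv vp i - psum (Gv vp) n / INR n.
Definition Zv n vp i := psum (wv n vp) i.
Definition D2 n (Z : nat -> R) j := Z (nx n j) - 2 * Z j + Z (pr n j).
Definition D1 n (Z : nat -> R) j := Z (nx n j) - Z (pr n j).

Lemma psum_nx n w i : (i < n)%nat -> psum w n = 0 -> psum w (nx n i) - psum w i = w i.
Proof.
  intros Hi H. unfold nx. destruct (Nat.eqb_spec i (n-1)).
  - subst. replace n with (S (n-1)) in H by lia. simpl in H. simpl. lra.
  - simpl. ring.
Qed.

Lemma D2_Zv n vp : (1 <= n)%nat -> psum vp n = 0 -> forall i, (i < n)%nat -> D2 n (Zv n vp) i = vp i.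
Proof.
  intros H1 H0 i Hi.
  assert (HI: INR n <> 0) by (apply not_0_INR; lia).
  assert (Hw: psum (wv n vp) n = 0).
  { unfold wv. rewrite psum_subc. field. exact HI. }
  assert (Hwr: forall k, (k < n)%nat -> wv n vp k - wv n vp (pr n k) = vp k).
  { intros k Hk. unfold wv, Gv, pr. destruct k.
    - replace (S (n-1)) with n by lia. rewrite H0. simpl. ring.
    - simpl. ring. }
  unfold D2, Zv.
  pose proof (psum_nx n (wv n vp) i Hi Hw) as A.
  pose proof (psum_nx n (wv n vp) (pr n i) (pr_lt n i Hi) Hw) as B.
  rewrite nx_pr in B by exact Hi.
  rewrite <- (Hwr i Hi). lra.
Qed.

Theorem mainTheorem10 (n : nat) (Hn : (3 <= n)%nat) :
  (forall t, horizontal_with n (gamma0_a n) (gamma0_p n) (fun _ _ => 2 * PI / INR n) t) /\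
  (forall t, perimeter n (gamma0_a n t) (gamma0_p n t) = 2 * INR n * tan (PI / INR n)) /\
  (forall va vp : nat -> R,
     tangent_to_level n (gamma0_a n 1) (gamma0_p n 1) va vp ->
     exists (du du' : nat -> R -> R) (da dp : R -> nat -> R),
       (forall j t, is_derive (du j) t (du' j t) /\ continuous (du' j) t) /\
       (forall j, (j < n)%nat ->
          da 0 j = 0 /\ dp 0 j = 0 /\ da 1 j = va j /\ dp 1 j = vp j) /\
       (forall t, 0 <= t <= 1 ->
          linearized_at n (gamma0_a n) (gamma0_p n) (fun _ _ => 2 * PI / INR n)
            du da dp t)).
Proof.
  assert (H1 : (1 <= n)%nat) by lia.
  assert (HI3 : 3 <= INR n) by (replace 3 with (INR 3) by (simpl; ring); apply le_INR; exact Hn).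
  set (th := PI / INR n).
  assert (Hth : 0 < th < PI/2).
  { unfold th. pose proof PI_RGT_0. split.
    - apply Rdiv_lt_0_compat; lra.
    - apply Rmult_lt_reg_r with (INR n). lra. unfold Rdiv. rewrite Rmult_assoc, Rinv_l by lra.
      nra. }
  assert (Hs: 0 < sin th) by (apply sin_gt_0; lra).
  assert (Hc: 0 < cos th) by (apply cos_gt_0; lra).
  assert (Hh : 2 * PI / INR n = 2 * th) by (unfold th; field; lra).
  rewrite Hh.
  assert (Hg : forall t j, (j < n)%nat ->
     gamma0_a n t j - aprev n (gamma0_a n t) j = 2 * th /\
     anext n (gamma0_a n t) j - gamma0_a n t j = 2 * th).
  { intros t j Hj. split. apply gamma0_m; assumption. apply gamma0_p'; assumption. }
  assert (HPhi0 : forall t j, (j < n)%nat -> Phi n (gamma0_a n t) (gamma0_p n t) j = 0).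
  { intros t j Hj. destruct (Hg t j Hj). apply (Phi0 n _ th); assumption. }
  split; [|split].
  -
    intros t j Hj. split.
    + unfold gamma0_a. rewrite Hh. auto_derive. auto. ring.
    + rewrite HPhi0 by exact Hj. unfold gamma0_p. auto_derive. auto. ring.
  -
    intros t. unfold perimeter. rewrite sum_psum. replace (S (n-1)) with n by lia.
    rewrite (psum_ext _ (fun _ => 2 * tan th)).
    + rewrite psum_const. ring.
    + intros i Hi. destruct (Hg t i Hi). apply (SL0 n _ th); assumption.
  - intros va vp Htan.
    assert (Hsum : psum vp n = 0).
    { unfold tangent_to_level, gamma0_p in Htan; cbv beta in Htan.
      pose proof (is_derive_unique _ _ _ (perim_deriv n (gamma0_a n 1) va vp th H1 Hth (Hg 1))) as Hd.
      assert (Htan' : (2 - 2 * cos (2*th)) / sin (2*th) * psum vp n = 0) by (rewrite <- Hd; exact Htan).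
      clear Htan; rename Htan' into Htan.
      assert (H2: 0 < sin (2*th)) by (rewrite sin_2a; repeat apply Rmult_lt_0_compat; lra).
      assert (H3: cos (2*th) < 1) by (rewrite cos_2a_sin; nra).
      assert (H4: 0 < (2 - 2 * cos (2*th)) / sin (2*th)) by (apply Rdiv_lt_0_compat; lra).
      destruct (Rmult_integral _ _ Htan) as [A|A]; lra. }
    set (h := 2 * th). set (K := Kc th). set (L := Lc th).
    assert (HK : h * K <> 0).
    { unfold h, K, Kc. apply Rgt_not_eq. apply Rmult_lt_0_compat. lra.
      apply Rinv_0_lt_compat. nra. }
    assert (HKs : K <> 0 /\ h <> 0).
    { split; intro E; apply HK; rewrite E; ring. }
    set (Z := Zv n vp).
    set (W := fun j => h * K * va j + h * L * D1 n Z j).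
    set (dp := fun t j => (3*t^2 - 2*t^3) * D2 n Z j + (t^3 - t^2) * D2 n W j).
    set (da := fun t j => ((6*t - 6*t^2) * Z j + (3*t^2 - 2*t) * W j
                - h * L * ((3*t^2 - 2*t^3) * D1 n Z j + (t^3 - t^2) * D1 n W j)) / (h * K)).
    set (du := fun j t => ((6 - 12*t) * Z j + (6*t - 2) * W j
                - h * L * ((6*t - 6*t^2) * D1 n Z j + (3*t^2 - 2*t) * D1 n W j)) / (h * K)).
    set (du' := fun j t => ((-12) * Z j + 6 * W j
                - h * L * ((6 - 12*t) * D1 n Z j + (6*t - 2) * D1 n W j)) / (h * K)).
    exists du, du', da, dp. split; [|split].
    + intros j t. split.
      * unfold du, du'. auto_derive. auto. field. first [exact HK | exact HKs].
      * apply (ex_derive_continuous (V := R_NormedModule) (du' j) t). unfold du'. auto_derive. auto.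
    + intros j Hj. unfold da, dp. repeat split.
      * field. first [exact HK | exact HKs].
      * ring.
      * unfold W. field. first [exact HK | exact HKs].
      * unfold Z. rewrite D2_Zv by assumption. ring.
    + intros t _ j Hj. split.
      * unfold da, du. auto_derive. auto. field. first [exact HK | exact HKs].
      * rewrite HPhi0 by exact Hj.
        change (gamma0_p n t) with (fun _ : nat => 1).
        destruct (Hg t j Hj) as [A B].
        rewrite (dirPhi_val n _ (da t) (dp t) th j A B Hth).
        rewrite !pnext_nx, !pprev_pr.
        unfold dp, da, D2, D1. rewrite (pr_nx n j Hj), (nx_pr n j Hj).
        auto_derive. auto.
        fold K L. field. first [exact HK | exact HKs].
Qed.
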